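(* Let $X$ be a compact metric space and $f\colon X\to X$ continuous. Let $(Z_n^1)_n,\dots,(Z_n^k)_n$ be a finite collection of sequences of subsets of $X$, and write $Z_n=\bigcup_{j=1}^kZ_n^j$. Then for every $\xi\in C(X)$, $$\overline{CP}_{(Z_n)}(\xi)=\max_{1\le j\le k}\overline{CP}_{(Z_n^j)_n}(\xi).$$
   Context: $S_n\xi=\sum_{i=0}^{n-1}\xi\circ f^i$; $B(x,n,\delta)=\{y\mid d(f^ix,f^iy)<\delta,\ 0\le i\le n\}$. For a sequence $(Y_n)$ of subsets, $\Lambda_n(Y_n,\xi,\delta)=\inf\{\sum_{x\in E}e^{S_n\xi(x)}\mid\bigcup_{x\in E}B(x,n,\delta)\supset Y_n\}$ and the upper capacity pressure is $\overline{CP}_{(Y_n)}(\xi)=\lim_{\delta\to0}\limsup_{n\to\infty}\frac1n\log\Lambda_n(Y_n,\xi,\delta)$. *)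

(* Defs.v *)
From HB Require Import structures.
From mathcomp Require Import all_boot all_order all_algebra finmap.
From mathcomp Require Import all_classical all_reals all_analysis.
Set Implicit Arguments. Unset Strict Implicit. Unset Printing Implicit Defensive.
Import Order.TTheory GRing.Theory Num.Theory.
Import numFieldNormedType.Exports.
Local Open Scope classical_set_scope.
Local Open Scope ring_scope.

Section CapacityPressure.
Context {R : realType} {X : metricType R}.

Definition birk_sum (f : X -> X) (xi : X -> R) (n : nat) (x : X) : R :=
  \sum_(0 <= i < n) xi (iter i f x).

Definition bowen_ball (f : X -> X) (x : X) (n : nat) (delta : R) : set X :=
  [set y | forall i : nat, (i <= n)%N -> mdist (iter i f x) (iter i f y) < delta].

Definition Lambda (f : X -> X) (xi : X -> R) (delta : R) (n : nat) (Y : set X)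
  : \bar R :=
  ereal_inf [set (\sum_(x <- E) expR (birk_sum f xi n x))%:E
            | E in [set E : {fset X} |
                    Y `<=` [set y | exists2 x, x \in E & bowen_ball f x n delta y]]].

Definition elog (a : \bar R) : \bar R :=
  match a with
  | r%:E => if (0 < r)%R then (ln r)%:E else -oo
  | +oo => +oo
  | -oo => -oo
  end%E.

Definition upper_cap_pressure (f : X -> X) (xi : X -> R) (Y : nat -> set X)
  : \bar R :=
  lim ((fun delta : R =>
          limn_esup (fun n : nat => ((n%:R)^-1)%:E * elog (Lambda f xi delta n (Y n)))%E)
       @ 0^'+).

End CapacityPressure.

(* Main.v *)
Require Import Defs.
From HB Require Import structures.
From mathcomp Require Import all_boot all_order all_algebra finmap.
From mathcomp Require Import all_classical all_reals all_analysis.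
From mathcomp Require Import lra.
Import Order.TTheory GRing.Theory Num.Theory.
Import numFieldNormedType.Exports.
Local Open Scope classical_set_scope.
Local Open Scope ring_scope.

Section Aux.
Context {R : realType} {X : metricType R}.
Implicit Types (f : X -> X) (xi : X -> R).
Local Open Scope ereal_scope.

Lemma Lambda_ge0 f xi d n Y : 0 <= Lambda f xi d n Y.
Proof.
apply: le_ereal_inf_tmp => _ [E _ <-]; rewrite lee_fin.
by apply: sumr_ge0 => x _; exact: expR_ge0.
Qed.

Lemma Lambda_subset f xi d n (Y Y' : set X) : Y `<=` Y' ->
  Lambda f xi d n Y <= Lambda f xi d n Y'.
Proof.
move=> YY'; apply: ereal_inf_le_tmp => _ [E HE <-]; exists E => //.
exact: subset_trans HE.
Qed.

Lemma Lambda_delta f xi d1 d2 n Y : (d1 <= d2)%R ->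
  Lambda f xi d2 n Y <= Lambda f xi d1 n Y.
Proof.
move=> d12; apply: ereal_inf_le_tmp => _ [E HE <-]; exists E => //.
move=> y /HE [x xE Bx]; exists x => // i ilt.
exact: lt_le_trans (Bx i ilt) d12.
Qed.

End Aux.
Section Aux2.
Context {R : realType} {X : metricType R}.
Implicit Types (f : X -> X) (xi : X -> R).

Lemma sum_fsetU_le (F : X -> R) (A B : {fset X}) : (forall x, 0 <= F x) ->
  \sum_(x <- (A `|` B)%fset) F x <= \sum_(x <- A) F x + \sum_(x <- B) F x.
Proof.
move=> F0.
rewrite (big_fsetID _ (mem A)) [X in _ <= _ + X](big_fsetID _ (mem A)) /=.
have -> : \sum_(i <- [fset x in (A `|` B)%fset | mem A x]%fset) F i = \sum_(x <- A) F x.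
  by apply: eq_fbigl => i; rewrite !inE /=; case: (i \in A); rewrite /= ?andbF ?andbT.
have -> : \sum_(i <- [fset x in (A `|` B)%fset | ~~ mem A x]%fset) F i =
   \sum_(i <- [fset x in B | ~~ mem A x]%fset) F i.
  by apply: eq_fbigl => i; rewrite !inE /=; case: (i \in A); rewrite /= ?andbF ?andbT.
rewrite lerD2l lerDr; apply: sumr_ge0 => i _; exact: F0.
Qed.

Local Open Scope ereal_scope.

Lemma Lambda_union f xi d n (Y1 Y2 : set X) :
  Lambda f xi d n (Y1 `|` Y2) <= Lambda f xi d n Y1 + Lambda f xi d n Y2.
Proof.
have g1 := Lambda_ge0 f xi d n Y1; have g2 := Lambda_ge0 f xi d n Y2.
case E1: (Lambda f xi d n Y1) => [r1| |]; last by rewrite E1 in g1.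
  2: by rewrite addye ?leey // -ltNye (lt_le_trans _ g2).
case E2: (Lambda f xi d n Y2) => [r2| |]; last by rewrite E2 in g2.
  2: by rewrite addey ?leey.
apply/lee_addgt0Pr => e e0.
have e20 : (0 < e / 2)%R by rewrite divr_gt0.
have [_ [A1 HA1 <-] lt1] := @lb_ereal_inf_adherent _ _ _ e20
  (ltac:(by rewrite /Lambda in E1 *; rewrite E1) : (Lambda f xi d n Y1) \is a fin_num).
have [_ [A2 HA2 <-] lt2] := @lb_ereal_inf_adherent _ _ _ e20
  (ltac:(by rewrite /Lambda in E2 *; rewrite E2) : (Lambda f xi d n Y2) \is a fin_num).
rewrite -/(Lambda _ _ _ _ _) E1 in lt1; rewrite -/(Lambda _ _ _ _ _) E2 in lt2.
apply: (@le_trans _ _ (\sum_(x <- (A1 `|` A2)%fset) expR (birk_sum f xi n x))%:E).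
  apply: ereal_inf_lbound; exists (A1 `|` A2)%fset => //.
  move=> y [/HA1 [x xA Bx]|/HA2 [x xA Bx]]; exists x => //; rewrite inE xA ?orbT //.
apply: (@le_trans _ _ ((\sum_(x <- A1) expR (birk_sum f xi n x))%:E +
                       (\sum_(x <- A2) expR (birk_sum f xi n x))%:E)).
  rewrite -EFinD lee_fin; apply: sum_fsetU_le => x; exact: expR_ge0.
rewrite -!EFinD lee_fin; rewrite !lte_fin in lt1 lt2.
have -> : (r1 + r2 + e = (r1 + e / 2) + (r2 + e / 2))%R.
  by rewrite addrACA -splitr.
by rewrite lerD // ltW.
Qed.
End Aux2.
Section Aux3.
Context {R : realType} {X : metricType R}.
Implicit Types (f : X -> X) (xi : X -> R).
Local Open Scope ereal_scope.

Lemma elog_le (x y : \bar R) : x <= y -> elog x <= elog y.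
Proof.
case: x => [r| |]; case: y => [s| |] //=; rewrite ?lee_fin => rs.
- case: ifPn => r0; last by rewrite leNye.
  by rewrite (lt_le_trans r0 rs) lee_fin ler_ln // posrE (lt_le_trans r0 rs).
- exact: leey.
- exact: leNye.
Qed.

Lemma elog_add (x y : \bar R) : 0 <= x -> x <= y ->
  elog (x + y) <= (ln 2)%:E + elog y.
Proof.
case: x => [r| |]; case: y => [s| |] //=; rewrite ?lee_fin => r0 rs.
- case: ifPn => rs0; last by rewrite leNye.
  have s0 : (0 < s)%R by lra.
  rewrite s0 -EFinD lee_fin -lnM ?posrE //.
  by rewrite ler_ln ?posrE ?mulr_gt0 // mulr_natl mulr2n lerD2r.
Qed.

Definition aseq f xi d (Y : nat -> set X) n :=
  ((n%:R)^-1)%:E * elog (Lambda f xi d n (Y n)).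

Lemma aseq_subset f xi d (Y Y' : nat -> set X) n : Y n `<=` Y' n ->
  aseq f xi d Y n <= aseq f xi d Y' n.
Proof.
move=> YY; apply: lee_wpmul2l; first by rewrite lee_fin invr_ge0.
exact/elog_le/Lambda_subset.
Qed.

Lemma aseq_delta f xi d1 d2 (Y : nat -> set X) n : (d1 <= d2)%R ->
  aseq f xi d2 Y n <= aseq f xi d1 Y n.
Proof.
move=> dd; apply: lee_wpmul2l; first by rewrite lee_fin invr_ge0.
exact/elog_le/Lambda_delta.
Qed.

Lemma aseq_union f xi d (Y1 Y2 : nat -> set X) n :
  aseq f xi d (fun n => Y1 n `|` Y2 n) n <=
  (((n%:R)^-1) * ln 2)%:E + maxe (aseq f xi d Y1 n) (aseq f xi d Y2 n).
Proof.
have Hn : 0 <= ((n%:R)^-1)%:E :> \bar R by rewrite lee_fin invr_ge0.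
wlog L12 : Y1 Y2 / Lambda f xi d n (Y1 n) <= Lambda f xi d n (Y2 n).
  move=> H; case: (leP (Lambda f xi d n (Y1 n)) (Lambda f xi d n (Y2 n))) => L.
    exact: H.
  have := H Y2 Y1 (ltW L); rewrite maxC.
  apply: le_trans; rewrite /aseq; apply: lee_wpmul2l => //.
  by apply: elog_le; apply: Lambda_subset => y [] ?; [right|left].
rewrite /aseq; apply: (@le_trans _ _ (((n%:R)^-1)%:E * ((ln 2)%:E +
    elog (Lambda f xi d n (Y2 n))))).
  apply: (lee_wpmul2l Hn); apply: (@le_trans _ _ (elog (Lambda f xi d n (Y1 n) + Lambda f xi d n (Y2 n)))); last exact: (elog_add _ _ (Lambda_ge0 _ _ _ _ _) L12).
  exact/elog_le/Lambda_union.
rewrite muleDr // EFinM; apply: leeD => //.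
by rewrite le_max lexx orbT.
Qed.

End Aux3.
Section Aux4.
Context {R : realType}.
Local Open Scope ereal_scope.
Implicit Types (u v : (\bar R)^nat).

Lemma limsup_le_near u v : (\forall n \near \oo, u n <= v n) ->
  limn_esup u <= limn_esup v.
Proof.
move=> H; rewrite /limn_esup /limf_esup.
apply: le_ereal_inf_tmp => _ [V HV <-].
apply: ge_ereal_inf; exists (ereal_sup (u @` (V `&` [set n | u n <= v n]))).
  by exists (V `&` [set n | u n <= v n]) => //; apply: filterI.
apply: ge_ereal_sup => _ [n [Vn /= uv] <-].
by apply: le_trans uv _; apply: ereal_sup_ubound; exists n.
Qed.

Lemma limsup_max u v :
  limn_esup (fun n => maxe (u n) (v n)) <= maxe (limn_esup u) (limn_esup v).
Proof.
rewrite leNgt; apply/negP => H.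
rewrite gt_max in H; case/andP: H => H1 H2.
move: H1 H2; rewrite {1 2}/limn_esup /limf_esup.
move=> /ereal_inf_lt [_ [V1 HV1 <-] l1] /ereal_inf_lt [_ [V2 HV2 <-] l2].
have : limn_esup (fun n => maxe (u n) (v n)) <=
    maxe (ereal_sup (u @` V1)) (ereal_sup (v @` V2)).
  apply: ge_ereal_inf; exists (ereal_sup ((fun n => maxe (u n) (v n)) @` (V1 `&` V2))).
    by exists (V1 `&` V2) => //; apply: filterI.
  apply: ge_ereal_sup => _ [n [V1n V2n] <-].
  apply: le_max2; apply: ereal_sup_ubound; by exists n.
by rewrite leNgt gt_max l1 l2.
Qed.

Lemma limsup_shift (c : nat -> R) u :
  (forall e : R, (0 < e)%R -> \forall n \near \oo, (c n <= e)%R) ->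
  limn_esup (fun n => (c n)%:E + u n) <= limn_esup u.
Proof.
move=> Hc; apply/lee_addgt0Pr => e e0.
rewrite -leeBlDr //.
rewrite {2}/limn_esup /limf_esup.
apply: le_ereal_inf_tmp => _ [V HV <-].
rewrite leeBlDr //.
apply: ge_ereal_inf; exists (ereal_sup ((fun n => (c n)%:E + u n) @` (V `&` [set n | (c n <= e)%R]))).
  by exists (V `&` [set n | (c n <= e)%R]) => //; apply: filterI => //; exact: Hc.
apply: ge_ereal_sup => _ [n [Vn /= ce] <-].
rewrite addeC; apply: leeD; last by rewrite lee_fin.
by apply: ereal_sup_ubound; exists n.
Qed.

End Aux4.
Section Aux5.
Context {R : realType} {X : metricType R}.
Implicit Types (f : X -> X) (xi : X -> R).
Local Open Scope ereal_scope.

Lemma cn_small (e : R) : (0 < e)%R ->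
  \forall n \near \oo, (((n%:R)^-1) * ln 2 <= e :> R)%R.
Proof.
move=> e0; exists (Num.truncn (ln (2 : R) / e)).+1 => // n /= Nn.
have n0 : (0 < n%:R :> R)%R by rewrite ltr0n (leq_trans _ Nn).
have h : (ln (2:R) / e < n%:R)%R.
  by apply: lt_le_trans (truncnS_gt _) _; rewrite ler_nat.
rewrite mulrC ler_pdivrMr //; rewrite ltr_pdivrMr // in h.
by rewrite mulrC ltW.
Qed.

Definition gfun f xi (Y : nat -> set X) (d : R) := limn_esup (aseq f xi d Y).

Lemma gfun_union f xi (Y1 Y2 : nat -> set X) d :
  gfun f xi (fun n => Y1 n `|` Y2 n) d = maxe (gfun f xi Y1 d) (gfun f xi Y2 d).
Proof.
apply/eqP; rewrite eq_le; apply/andP; split.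
  apply: le_trans (limsup_max _ _).
  apply: le_trans; last exact: (@limsup_shift _ (fun n => ((n%:R)^-1) * ln 2)%R _ (@cn_small)).
  by apply: limsup_le_near; near=> n; apply: aseq_union.
by rewrite ge_max; apply/andP; split; apply: limsup_le_near; near=> n;
  apply: aseq_subset => y Hy; [left|right].
Unshelve. all: by end_near.
Qed.

Lemma gfun_noninc f xi (Y : nat -> set X) (d1 d2 : R) : (d1 <= d2)%R ->
  gfun f xi Y d2 <= gfun f xi Y d1.
Proof.
by move=> dd; apply: limsup_le_near; near=> n; apply: aseq_delta.
Unshelve. all: by end_near.
Qed.

Lemma pressureE f xi (Y : nat -> set X) :
  upper_cap_pressure f xi Y =
  ereal_sup (gfun f xi Y @` [set` Interval (BRight 0%R) (BInfty R false)]).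
Proof.
rewrite /upper_cap_pressure; apply: cvg_lim => //.
apply: (@nonincreasing_at_right_cvge _ (gfun f xi Y)) => //.
by move=> x y _ _ xy; apply: gfun_noninc.
Qed.

End Aux5.
Section Aux6.
Context {R : realType} {X : metricType R}.
Implicit Types (f : X -> X) (xi : X -> R).
Local Open Scope ereal_scope.

Lemma sup_max (A : set R) (g1 g2 : R -> \bar R) :
  ereal_sup ((fun d => maxe (g1 d) (g2 d)) @` A) =
  maxe (ereal_sup (g1 @` A)) (ereal_sup (g2 @` A)).
Proof.
apply/eqP; rewrite eq_le; apply/andP; split.
  apply: ge_ereal_sup => _ [d Ad <-].
  by apply: le_max2; apply: ereal_sup_ubound; exists d.
rewrite ge_max; apply/andP; split; apply: ge_ereal_sup => _ [d Ad <-];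
  apply: le_ereal_sup_tmp; exists (maxe (g1 d) (g2 d)); try (by exists d);
  by rewrite le_max lexx ?orbT.
Qed.

Lemma pressure_union f xi (Y1 Y2 : nat -> set X) :
  upper_cap_pressure f xi (fun n => Y1 n `|` Y2 n) =
  maxe (upper_cap_pressure f xi Y1) (upper_cap_pressure f xi Y2).
Proof.
rewrite !pressureE -sup_max; congr ereal_sup; apply: eq_imagel => d _.
exact: gfun_union.
Qed.

Lemma pressure_big f xi k (Z : 'I_k.+1 -> nat -> set X) :
  upper_cap_pressure f xi (fun n => \bigcup_(j in [set: 'I_k.+1]) Z j n) =
  \big[Order.max/-oo]_(j < k.+1) upper_cap_pressure f xi (Z j).
Proof.
elim: k Z => [|k IH] Z.
  rewrite big_ord_recr big_ord0 /= maxNye; congr upper_cap_pressure.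
  apply/funext => n; apply/seteqP; split => [y [j _ Hy]|y Hy].
    have E : j = ord_max by apply: val_inj => /=; case: j {Hy} => -[].
    by rewrite -E.
  by exists ord_max.
rewrite big_ord_recr /= -IH -pressure_union; congr upper_cap_pressure.
apply/funext => n; apply/seteqP; split => [y [j _ Hy]|y [[j _ Hy]|Hy]].
- case: (ltnP j k.+1) => hj.
    left; exists (Ordinal hj) => //.
    by have -> : widen_ord (leqnSn k.+1) (Ordinal hj) = j by apply: val_inj.
  right; have -> : (ord_max : 'I_k.+2) = j => //.
  by apply: val_inj => /=; apply/eqP; rewrite eqn_leq hj -ltnS ltn_ord.
- by exists (widen_ord (leqnSn k.+1) j).
- by exists ord_max.
Qed.

End Aux6.

Theorem lemma4p1 (R : realType) (X : metricType R) (f : X -> X)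
  (hX : compact [set: X]) (hf : continuous f)
  (k : nat) (hk : (0 < k)%N) (Z : 'I_k -> nat -> set X)
  (xi : X -> R) (hxi : continuous xi) :
  upper_cap_pressure f xi (fun n => \bigcup_(j in [set: 'I_k]) Z j n) =
  (\big[Order.max/-oo]_(j < k) upper_cap_pressure f xi (Z j))%E.
Proof.
case: k hk Z => [//|k] _ Z.
exact: pressure_big.
Qed.
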